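(* Let $p,q$ be coprime odd integers with $p>|q|>0$, and let $S(p,q)$ be the corresponding 2-bridge knot. Let $S_0(S(p,q))$ be the subset of the $SL(2,\mathbb{C})$-character variety $X(\pi_1(E_{S(p,q)}))$ consisting of characters $\chi_\rho$ with $\chi_\rho(\mu)=\operatorname{trace}(\rho(\mu))=0$, where $\mu$ is a meridian. Then $S_0(S(p,q))$ is a finite set consisting of exactly the characters of metabelian representations: namely the single character of an abelian (reducible) representation together with the $\frac{p-1}{2}$ distinct characters of irreducible metabelian representations.
   Context: $E_K$ is the exterior of a knot $K$ in $S^3$ and $\pi_1(E_K)$ its knot group. For coprime odd integers $p,q$ with $p>|q|>0$, the 2-bridge knot $S(p,q)$ (Schubert notation) has knot group $\langle x_1,x_2\mid wx_1=x_2w\rangle$ with $w=x_1^{e_1}x_2^{e_2}x_1^{e_3}\cdots x_2^{e_{p-1}}$, $e_i=(-1)^{\lfloor iq/p\rfloor}$, where $x_1,x_2$ are meridians. For a finitely presented group $G$, the $SL(2,\mathbb{C})$-character variety $X(G)$ is the set of characters $\chi_\rho(g)=\operatorname{trace}(\rho(g))$ of representations $\rho:G\to SL(2,\mathbb{C})$ (in the sense of Culler–Shalen), an affine algebraic variety. A representation $\rho$ is metabelian if $\rho([G,G])$ is abelian. *)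

(* Defs.v *)
From HB Require Import structures.
From mathcomp Require Import all_boot all_order all_algebra.
From mathcomp Require Import complex.
From mathcomp Require Import Rstruct.
Set Implicit Arguments. Unset Strict Implicit. Unset Printing Implicit Defensive.
Import Order.TTheory GRing.Theory Num.Theory.
Local Open Scope ring_scope.

Definition CC : fieldType := (Rdefinitions.R)[i].

(* Words in the generators x1, x2 of the knot group and their inverses.
   A letter (g, b) stands for x_(g+1)^(+-1): g = false is x1, g = true is x2;
   b = true means the inverse.  Every element of pi_1(E_K) is represented
   by such a word (the free group on x1, x2 surjects onto the knot group). *)
Definition letter := (bool * bool)%type.
Definition word := seq letter.

Definition mx_letter (X1 X2 : 'M[CC]_2) (l : letter) : 'M[CC]_2 :=
  let X := if l.1 then X2 else X1 in if l.2 then invmx X else X.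

Definition evalw (X1 X2 : 'M[CC]_2) (w : word) : 'M[CC]_2 :=
  foldr (fun l M => mx_letter X1 X2 l *m M) 1%:M w.

Definition oddz (z : int) : bool := odd (absz z).

(* The word w = x1^{e_1} x2^{e_2} x1^{e_3} ... x2^{e_{p-1}},
   e_i = (-1)^floor(i q / p): letter i is x1 for i odd, x2 for i even,
   inverted iff floor(i q / p) is odd ((_ %/ _)%Z is floor division for p > 0). *)
Definition wpq (p : nat) (q : int) : word :=
  [seq (~~ odd i, oddz ((i%:Z * q) %/ p%:Z)%Z) | i <- iota 1 p.-1].

(* SL(2,C)-representations of pi_1(E_{S(p,q)}) = < x1, x2 | w x1 = x2 w >:
   they are exactly the pairs (rho(x1), rho(x2)) of SL(2,C)-matrices
   satisfying the relation. *)
Definition is_rep (p : nat) (q : int) (X1 X2 : 'M[CC]_2) : Prop :=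
  \det X1 = 1 /\ \det X2 = 1 /\
  evalw X1 X2 (wpq p q) *m X1 = X2 *m evalw X1 X2 (wpq p q).

Definition charac (X1 X2 : 'M[CC]_2) : word -> CC :=
  fun w => \tr (evalw X1 X2 w).

Definition invw (w : word) : word := rev [seq (l.1, ~~ l.2) | l <- w].
Definition commw (u v : word) : word := invw u ++ invw v ++ u ++ v.

Inductive in_comm : word -> Prop :=
| in_comm_nil : in_comm [::]
| in_comm_comm u v : in_comm (commw u v)
| in_comm_inv w : in_comm w -> in_comm (invw w)
| in_comm_cat w1 w2 : in_comm w1 -> in_comm w2 -> in_comm (w1 ++ w2).

Definition metabelian (X1 X2 : 'M[CC]_2) : Prop :=
  forall u v, in_comm u -> in_comm v ->
    evalw X1 X2 u *m evalw X1 X2 v = evalw X1 X2 v *m evalw X1 X2 u.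

Definition abelian_rep (X1 X2 : 'M[CC]_2) : Prop :=
  forall u v, evalw X1 X2 u *m evalw X1 X2 v = evalw X1 X2 v *m evalw X1 X2 u.

(* rho is reducible: there is a common invariant line in C^2
   (row vectors, matrices acting on the right). *)
Definition reducible (X1 X2 : 'M[CC]_2) : Prop :=
  exists v : 'rV[CC]_2, v != 0 /\
    exists a b : CC, v *m X1 = a *: v /\ v *m X2 = b *: v.

Definition irreducible (X1 X2 : 'M[CC]_2) : Prop := ~ reducible X1 X2.

(* S_0(S(p,q)) : characters chi_rho with trace rho(mu) = 0, mu = x1 *)
Definition in_S0 (p : nat) (q : int) (chi : word -> CC) : Prop :=
  exists X1 X2, is_rep p q X1 X2 /\ \tr X1 = 0 /\ chi = charac X1 X2.

(* Main.v *)
Require Import Defs.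
From HB Require Import structures.
From mathcomp Require Import all_boot all_order all_algebra all_solvable all_field.
From mathcomp Require Import complex Rstruct.
From mathcomp Require Import ring.
Import Order.TTheory GRing.Theory Num.Theory.
Local Open Scope ring_scope.
Lemma sum2 (F : 'I_2 -> CC) : \sum_(i < 2) F i = F 0 + F 1.
Proof. by rewrite !big_ord_recl big_ord0 addr0; congr (F _ + F _); apply/val_inj. Qed.
Lemma det2 (A : 'M[CC]_2) : \det A = A 0 0 * A 1 1 - A 0 1 * A 1 0.
Proof.
rewrite (expand_det_row _ 0) sum2 /cofactor !det_mx11 !mxE /=.
rewrite !expr0 !expr1 !mul1r.
have -> : lift 0 0 = 1 :> 'I_2 by apply/val_inj.
have -> : lift 1 0 = 0 :> 'I_2 by apply/val_inj.
ring.
Qed.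
Lemma tr2 (A : 'M[CC]_2) : \tr A = A 0 0 + A 1 1.
Proof. by rewrite /mxtrace sum2. Qed.
Lemma ord2P (i : 'I_2) : i = 0 \/ i = 1.
Proof. case: i => [[|[|//]] Hi]; [left|right]; exact/val_inj. Qed.
Lemma prim_ex n : (n > 0)%N -> exists z : CC, n.-primitive_root z.
Proof.
pose p : {poly CC} := 'X^n - 1; have [r Dp] := closed_field_poly_normal p.
move=> n_gt0; rewrite (monicP _) ?monicXnsubC // scale1r in Dp.
have rn1: all n.-unity_root r by apply/allP=> z; rewrite -root_prod_XsubC -Dp.
have sz_r: (n < (size r).+1)%N.
  by rewrite -(size_prod_XsubC r id) -Dp size_XnsubC.
have [|z] := hasP (has_prim_root n_gt0 rn1 _ sz_r); last by exists z.
by rewrite -separable_prod_XsubC -Dp separable_Xn_sub_1 // pnatr_eq0 -lt0n.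
Qed.
Lemma CH2 (A : 'M[CC]_2) : A *m A = \tr A *: A - (\det A)%:M.
Proof.
apply/matrixP=> i j; rewrite det2 tr2 !mxE sum2.
by case: (ord2P i) => ->; case: (ord2P j) => -> /=; rewrite ?mulr1n ?mulr0n; ring.
Qed.

Definition cf4 := (CC * CC * CC * CC)%type.
Definition act1 (t : CC) (v : cf4) : cf4 :=
  let: (a,b,c,d) := v in (-c - t*d, d, a + t*b, -b).
Definition actT (t : CC) (v : cf4) : cf4 :=
  let: (a,b,c,d) := v in (-b, a + t*b, -d, c + t*d).
Definition neg4 (v : cf4) : cf4 := let: (a,b,c,d) := v in (-a,-b,-c,-d).
Definition act2 t v := neg4 (act1 t (actT t v)).
Definition actl t (l : letter) v :=
  let v' := (if l.1 then act2 t v else act1 t v) in if l.2 then neg4 v' else v'.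
Definition cf t (w : word) : cf4 := foldr (actl t) (1,0,0,0) w.

Definition tf (X : 'M[CC]_2) := \tr X = 0 /\ \det X = 1.

Section TF.
Variables X1 X2 : 'M[CC]_2.
Hypothesis (h1 : tf X1) (h2 : tf X2).
Local Notation T := (X1 *m X2).
Local Notation t := (\tr (X1 *m X2)).

Lemma sq_tf X : tf X -> X *m X = - 1%:M.
Proof. by case=> tX dX; rewrite CH2 tX dX scale0r sub0r. Qed.

Lemma inv_tf X : tf X -> invmx X = - X.
Proof.
move=> hX; have uX : X \in unitmx by rewrite unitmxE hX.2 unitr1.
rewrite -[invmx X]mulmx1.
have <- : X *m - X = 1%:M by rewrite mulmxN sq_tf // opprK.
by rewrite mulmxA mulVmx // mul1mx.
Qed.

Lemma sq1 : X1 *m X1 = - 1%:M. Proof. exact: sq_tf. Qed.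
Lemma sq2 : X2 *m X2 = - 1%:M. Proof. exact: sq_tf. Qed.

Lemma sqT : T *m T = t *: T - 1%:M.
Proof. by rewrite CH2 det_mulmx h1.2 h2.2 mulr1. Qed.

Lemma XT2 : X1 *m T = - X2.
Proof. by rewrite mulmxA sq1 mulNmx mul1mx. Qed.

Lemma TS : T *m (X2 *m X1) = 1%:M.
Proof. by rewrite -!mulmxA (mulmxA X2) sq2 mulNmx mul1mx mulmxN sq1 opprK. Qed.
Lemma ST : (X2 *m X1) *m T = 1%:M.
Proof. by rewrite -!mulmxA (mulmxA X1) sq1 mulNmx mul1mx mulmxN sq2 opprK. Qed.

Lemma Seq : X2 *m X1 = t%:M - T.
Proof.
have h : T *m (t%:M - T) = 1%:M by rewrite mulmxBr mul_mx_scalar sqT opprB addrC subrK.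
by rewrite -[X2 *m X1]mulmx1 -h mulmxA ST mul1mx.
Qed.

Lemma XT : X1 *m T = t *: X1 - T *m X1.
Proof.
have h : T *m X1 = t *: X1 - X1 *m T.
  by rewrite -mulmxA Seq mulmxBr mul_mx_scalar.
by rewrite h opprB addrC subrK.
Qed.

Lemma XTX : X1 *m T *m X1 = T - t%:M.
Proof.
by rewrite XT mulmxBl -scalemxAl sq1 -(mulmxA (X1 *m X2)) sq1 mulmxN mulmx1 opprK scalerN scalemx1 addrC.
Qed.

Definition comb (a b c d : CC) : 'M[CC]_2 :=
  a%:M + b *: T + c *: X1 + d *: (T *m X1).
Definition combv (v : cf4) := let: (a,b,c,d) := v in comb a b c d.

Lemma trTX : \tr (T *m X1) = 0.
Proof. by rewrite mxtrace_mulC XT2 -scaleN1r mxtraceZ h2.1 mulr0. Qed.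

Lemma tr_comb a b c d : \tr (comb a b c d) = a *+ 2 + b * t.
Proof.
by rewrite /comb !mxtraceD mxtrace_scalar !mxtraceZ trTX h1.1 !mulr0 !addr0.
Qed.

Lemma X1comb a b c d : X1 *m comb a b c d = comb (-c - t*d) d (a + t*b) (-b).
Proof.
rewrite /comb !mulmxDr mul_mx_scalar -!scalemxAr (mulmxA X1 (X1 *m X2) X1) XTX XT sq1.
apply/matrixP=> i j; rewrite !mxE; ring.
Qed.

Lemma Tcomb a b c d : T *m comb a b c d = comb (-b) (a + t*b) (-d) (c + t*d).
Proof.
rewrite /comb !mulmxDr mul_mx_scalar -!scalemxAr (mulmxA (X1 *m X2) (X1 *m X2) X1) sqT mulmxBl -scalemxAl mul1mx.
apply/matrixP=> i j; rewrite !mxE; ring.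
Qed.

Lemma negcomb a b c d : - comb a b c d = comb (-a) (-b) (-c) (-d).
Proof. apply/matrixP=> i j; rewrite /comb !mxE; ring. Qed.

Lemma X2comb a b c d : X2 *m comb a b c d = combv (act2 t (a,b,c,d)).
Proof.
have E : X2 = - (X1 *m T) by rewrite XT2 opprK.
by rewrite {1}E mulNmx -mulmxA Tcomb X1comb negcomb.
Qed.

Lemma letter_eq (l : letter) :
  mx_letter X1 X2 l = if l.2 then - (if l.1 then X2 else X1) else (if l.1 then X2 else X1).
Proof. by case: l => [[] []] /=; rewrite /mx_letter /= ?inv_tf. Qed.

Lemma evalw_cf w : evalw X1 X2 w = combv (cf t w).
Proof.
elim: w => [|l w IH] /=.
  by apply/matrixP=> i j; rewrite /comb !mxE; ring.
rewrite IH letter_eq; case: (cf t w) => [[[a b] c] d].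
by case: l => [[] []] /=; rewrite ?mulNmx ?X2comb ?X1comb //= ?negcomb.
Qed.

Lemma charac_cf w :
  charac X1 X2 w = let: (a,b,c,d) := cf t w in a *+ 2 + b * t.
Proof. by rewrite /charac evalw_cf; case: (cf t w) => [[[a b] c] d]; rewrite tr_comb. Qed.

End TF.

From Stdlib Require Import FunctionalExtensionality.

Lemma charac_eq X1 X2 Y1 Y2 : tf X1 -> tf X2 -> tf Y1 -> tf Y2 ->
  \tr (X1 *m X2) = \tr (Y1 *m Y2) -> charac X1 X2 = charac Y1 Y2.
Proof.
move=> h1 h2 k1 k2 e; apply: functional_extensionality => w.
by rewrite (charac_cf _ _ h1 h2) (charac_cf _ _ k1 k2) e.
Qed.

Definition par4 (o : bool) (v : cf4) : Prop :=
  let: (a,b,c,d) := v in if o then a = 0 /\ b = 0 else c = 0 /\ d = 0.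

Lemma cf_par t w : par4 (odd (size w)) (cf t w).
Proof.
elim: w => [|l w IH] /=; first by [].
move: IH; case: (cf t w) => [[[a b] c] d].
by case: (odd (size w)) => -[-> ->]; case: l => [[] []] /=; split; ring.
Qed.

Lemma size_invw w : size (invw w) = size w.
Proof. by rewrite /invw size_rev size_map. Qed.

Lemma in_comm_even w : in_comm w -> ~~ odd (size w).
Proof.
elim=> [|u v|w' _ IH|w1 w2 _ IH1 _ IH2] //=.
- by rewrite /commw !size_cat !size_invw !oddD; case: (odd (size u)); case: (odd (size v)).
- by rewrite size_invw.
- by rewrite size_cat oddD (negbTE IH1) (negbTE IH2).
Qed.

Lemma metab_tf X1 X2 : tf X1 -> tf X2 -> metabelian X1 X2.
Proof.
move=> h1 h2 u v hu hv.
have E : forall w, in_comm w -> exists a b : CC,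
    evalw X1 X2 w = a%:M + b *: (X1 *m X2).
  move=> w hw; rewrite (evalw_cf _ _ h1 h2); have := cf_par (\tr (X1 *m X2)) w.
  rewrite (negbTE (in_comm_even _ hw)).
  case: (cf _ w) => [[[a b] c] d] /= [-> ->]; exists a, b.
  by rewrite /comb !scale0r !addr0.
have [a [b ->]] := E u hu; have [a' [b' ->]] := E v hv.
rewrite !mulmxDl !mulmxDr !mul_scalar_mx !mul_mx_scalar -!scalemxAl -!scalemxAr.
apply/matrixP=> i j; rewrite !mxE; ring.
Qed.

Lemma evalw_unit X1 X2 w : X1 \in unitmx -> X2 \in unitmx -> evalw X1 X2 w \in unitmx.
Proof.
move=> u1 u2; elim: w => [|l w IH] /=; first exact: unitmx1.
rewrite unitmx_mul IH andbT /mx_letter.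
by case: l => [[] []] /=; rewrite ?unitmx_inv.
Qed.

Lemma rep_tr2 p q X1 X2 : is_rep p q X1 X2 -> \tr X1 = 0 -> tf X1 /\ tf X2.
Proof.
move=> [d1 [d2 r]] t1.
have u1 : X1 \in unitmx by rewrite unitmxE d1 unitr1.
have u2 : X2 \in unitmx by rewrite unitmxE d2 unitr1.
have uW := evalw_unit _ _ (wpq p q) u1 u2.
split; split => //.
have : X2 = evalw X1 X2 (wpq p q) *m X1 *m invmx (evalw X1 X2 (wpq p q)).
  by rewrite r -mulmxA mulmxV // mulmx1.
by move->; rewrite mxtrace_mulC mulmxA mulVmx // mul1mx.
Qed.

Lemma mx_letter_sign X1 X2 (l : letter) : tf X1 -> tf X2 ->
  mx_letter X1 X2 l = (-1) ^+ l.2 *: (if l.1 then X2 else X1).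
Proof.
by move=> h1 h2; case: l => [[] []]; rewrite /mx_letter /= ?inv_tf // ?scaleN1r ?scale1r.
Qed.

Lemma evalw_alt X1 X2 (f : nat -> letter) : tf X1 -> tf X2 ->
  (forall i, (f i).1 = ~~ odd i) ->
  forall n m, exists s : bool,
    evalw X1 X2 (map f (iota m.*2.+1 n.*2)) = (-1) ^+ s *: (X1 *m X2) ^+ n.
Proof.
move=> h1 h2 hf; elim=> [|n IH] m.
  by exists false; rewrite /= expr0 scale1r.
have [s Es] := IH m.+1.
rewrite doubleS /= -[m.*2.+3]/((m.+1).*2.+1) Es.
rewrite !mx_letter_sign // !hf /= !odd_double /=.
exists ((f m.*2.+1).2 (+) (f m.*2.+2).2 (+) s).
rewrite !signr_addb exprS -!scalemxAr -!scalemxAl !scalerA -!scalemxAr !scalerA mulmxA.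
by congr (_ *: _); ring.
Qed.

Lemma odd_half p : odd p -> p = (p.-1./2).*2.+1.
Proof.
case: p => [//|p'] /= hp; congr S.
by rewrite halfK; move: hp; case: (odd p') => //= _; rewrite subn0.
Qed.

Lemma wpq_eval X1 X2 p q : tf X1 -> tf X2 -> odd p ->
  exists s : bool, evalw X1 X2 (wpq p q) = (-1)^+s *: (X1 *m X2)^+(p.-1./2).
Proof.
move=> h1 h2 hp; rewrite /wpq.
have e : p.-1 = (p.-1./2).*2 by rewrite {1}(odd_half _ hp).
rewrite [X in iota _ X]e.
have := @evalw_alt X1 X2 (fun i => (~~ odd i, oddz ((i%:Z * q) %/ p%:Z)%Z)) h1 h2.
by move=> H; apply: (H (fun i => erefl) (p.-1./2) 0%N).
Qed.

Section Pow.
Variables X1 X2 : 'M[CC]_2.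
Hypothesis (h1 : tf X1) (h2 : tf X2).
Local Notation T := (X1 * X2).
Local Notation S := (X2 * X1).

Lemma rsq1 : X1 * X1 = -1. Proof. exact: sq1. Qed.
Lemma rsq2 : X2 * X2 = -1. Proof. exact: sq2. Qed.

Lemma A1 : X1 * T = S * X1.
Proof. by rewrite mulrA rsq1 -mulrA rsq1 mulN1r mulrN1. Qed.

Lemma A2 n : X1 * T ^+ n = S ^+ n * X1.
Proof.
elim: n => [|n IH]; first by rewrite !expr0 mulr1 mul1r.
by rewrite exprS mulrA A1 -mulrA IH mulrA -exprS.
Qed.

Lemma A3 : X2 = - (X1 * T).
Proof. by rewrite mulrA rsq1 mulN1r opprK. Qed.

Lemma A4 : T * S = 1.
Proof. by rewrite mulrA -(mulrA X1) rsq2 mulrN1 mulNr rsq1 opprK. Qed.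
Lemma A4' : S * T = 1.
Proof. by rewrite mulrA -(mulrA X2) rsq1 mulrN1 mulNr rsq2 opprK. Qed.

Lemma A5 n : T ^+ n * S ^+ n = 1.
Proof.
rewrite -exprMn_comm ?A4 ?expr1n //.
by rewrite /GRing.comm A4 A4'.
Qed.

Lemma rel_to_pow k : T ^+ k * X1 = X2 * T ^+ k -> T ^+ (k.*2.+1) = -1.
Proof.
move=> r.
have e1 : T ^+ k * X1 = - (S ^+ k.+1 * X1).
  by rewrite r {1}A3 mulNr -mulrA -exprS A2.
have e2 : - T ^+ k = S ^+ k.+1.
  have e1' : S ^+ k.+1 * X1 = - (T ^+ k * X1) by rewrite e1 opprK.
  by rewrite -[S ^+ k.+1]mulr1 -[1]opprK -rsq1 mulrN mulrA e1' mulNr opprK -mulrA rsq1 mulrN1.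
have -> : k.*2.+1 = (k.+1 + k)%N by rewrite addSn -addnn.
have e3 : T ^+ k = - S ^+ k.+1 by rewrite -e2 opprK.
by rewrite exprD e3 mulrN A5.
Qed.

Lemma pow_to_rel k : T ^+ (k.*2.+1) = -1 -> T ^+ k * X1 = X2 * T ^+ k.
Proof.
move=> hp.
have e2 : T ^+ k = - S ^+ k.+1.
  rewrite -[T ^+ k]mulr1 -(A5 k.+1) mulrA -exprD.
  have -> : (k + k.+1)%N = k.*2.+1 by rewrite addnS -addnn.
  by rewrite hp mulN1r.
have E : X2 * T ^+ k = - (X1 * T) * T ^+ k by rewrite -A3.
by rewrite E mulNr -mulrA -exprS A2 e2 mulNr.
Qed.

End Pow.

Lemma rep_of_pow p q X1 X2 : tf X1 -> tf X2 -> odd p ->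
  (X1 * X2) ^+ p = -1 -> is_rep p q X1 X2.
Proof.
move=> h1 h2 hp hT; split; first exact: h1.2; split; first exact: h2.2.
have [s ->] := wpq_eval _ _ p q h1 h2 hp.
rewrite -scalemxAl -scalemxAr; congr (_ *: _).
apply: (pow_to_rel _ _ h1 h2); by rewrite -(odd_half _ hp).
Qed.

Lemma pow_of_rep p q X1 X2 : odd p -> is_rep p q X1 X2 -> \tr X1 = 0 ->
  (X1 * X2) ^+ p = -1.
Proof.
move=> hp hr t1; have [h1 h2] := rep_tr2 _ _ _ _ hr t1.
have [_ [_ r]] := hr.
have [s Es] := wpq_eval _ _ p q h1 h2 hp.
rewrite Es -scalemxAl -scalemxAr in r.
rewrite (odd_half _ hp); apply: (rel_to_pow _ _ h1 h2).
by clear Es; case: s r => /=; rewrite ?expr1 ?expr0 ?scaleN1r ?scale1r // => /oppr_inj.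
Qed.

Lemma scal_inj (v : 'rV[CC]_2) c d : v != 0 -> c *: v = d *: v -> c = d.
Proof.
move=> nv e; apply/eqP; rewrite -subr_eq0.
have : (c - d) *: v == 0 by rewrite scalerBl e subrr.
by rewrite scalemx_eq0 (negbTE nv) orbF.
Qed.

Lemma eig_quad (M : 'M[CC]_2) a b :
  M *m M = (a + b) *: M - (a * b)%:M ->
  exists v : 'rV[CC]_2, exists c, [/\ v != 0, v *m M = c *: v & (c = a \/ c = b)].
Proof.
move=> hM.
have hz : (M - a%:M) *m (M - b%:M) = 0.
  rewrite mulmxBl !mulmxBr hM mul_mx_scalar mul_scalar_mx mul_scalar_mx.
  apply/matrixP=> i j; rewrite !mxE; ring.
case: (eqVneq (M - a%:M) 0) => [ha|ha].
  have eM : M = a%:M by apply: subr0_eq.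
  exists (delta_mx 0 0), a; split; last by left.
  - apply/eqP=> /matrixP /(_ 0 0); rewrite !mxE /= => /eqP; by rewrite oner_eq0.
  - by rewrite eM mul_mx_scalar.
case: (pickP (fun i => row i (M - a%:M) != 0)) => [i Hi|H].
  exists (row i (M - a%:M)), b; split => //; last by right.
  have : row i (M - a%:M) *m (M - b%:M) = 0 by rewrite -row_mul hz row0.
  rewrite mulmxBr mul_mx_scalar => /eqP; rewrite subr_eq0 => /eqP //.
exfalso; move/eqP: ha; apply; apply/row_matrixP => i; rewrite row0.
by have := H i => /= /negbFE /eqP.
Qed.

Lemma eig_sq (v : 'rV[CC]_2) X a : v != 0 -> v *m X = a *: v -> X *m X = - 1%:M ->
  a * a = -1.
Proof.
move=> nv va sq; apply: (scal_inj _ _ _ nv).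
have : v *m (X *m X) = (a * a) *: v by rewrite mulmxA va -scalemxAl va scalerA.
by rewrite sq mulmxN mulmx1 scaleN1r => <-.
Qed.

Lemma red_t p q X1 X2 : is_rep p q X1 X2 -> \tr X1 = 0 -> reducible X1 X2 ->
  \tr (X1 *m X2) = -2.
Proof.
move=> hr t1 [v [nv [a [b [va vb]]]]].
have [h1 h2] := rep_tr2 _ _ _ _ hr t1.
have aa := eig_sq _ _ _ nv va (sq1 _ h1).
have bb := eig_sq _ _ _ nv vb (sq2 _ h2).
have a0 : a != 0 by apply/eqP=> a0; move: aa; rewrite a0 mul0r => /eqP; rewrite eq_sym oppr_eq0 oner_eq0.
have b0 : b != 0 by apply/eqP=> b0; move: bb; rewrite b0 mul0r => /eqP; rewrite eq_sym oppr_eq0 oner_eq0.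
have ev : forall w, exists c, c != 0 /\ v *m evalw X1 X2 w = c *: v.
  elim=> [|l w [c [c0 Ec]]] /=; first by exists 1; rewrite mulmx1 scale1r oner_eq0.
  rewrite mx_letter_sign // mulmxA -scalemxAr.
  exists ((-1) ^+ l.2 * (if l.1 then b else a) * c); split.
    by rewrite !mulf_neq0 ?signr_eq0 //; case: (l.1).
  by case: (l.1); rewrite ?va ?vb -!scalemxAl Ec !scalerA.
have [c [c0 Ec]] := ev (wpq p q).
have [_ [_ r]] := hr.
have ab : a = b.
  have : v *m (evalw X1 X2 (wpq p q) *m X1) = v *m (X2 *m evalw X1 X2 (wpq p q)) by rewrite r.
  rewrite !mulmxA Ec vb -!scalemxAl va Ec !scalerA => /(scal_inj _ _ _ nv).
  by move=> e; apply: (mulfI c0); rewrite e mulrC.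
have vT : v *m (X1 *m X2) = (-1) *: v by rewrite mulmxA va -scalemxAl vb scalerA -ab aa.
have : v *m ((X1 *m X2) *m (X1 *m X2)) = v.
  by rewrite mulmxA vT -scalemxAl vT scalerA mulrN1 opprK scale1r.
rewrite sqT // mulmxBr mulmx1 -scalemxAr vT scalerA.
move=> e; have f : \tr (X1 *m X2) * -1 - 1 = 1.
  by apply: (scal_inj _ _ _ nv); rewrite scalerBl scale1r e.
have -> : \tr (X1 *m X2) = -(\tr (X1 *m X2) * -1 - 1) - 1 by ring.
by rewrite f; ring.
Qed.

Lemma t2_red p X1 X2 : tf X1 -> tf X2 -> odd p -> \tr (X1 *m X2) = -2 ->
  (X1 * X2) ^+ p = -1 -> reducible X1 X2.
Proof.
move=> h1 h2 hp ht hT.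
have sT : (X1 * X2) * (X1 * X2) = (-2 : CC) *: (X1 * X2) - 1.
  by rewrite -ht; exact: sqT.
set T := X1 * X2 in sT hT.
have NN : (T + 1) * (T + 1) = 0.
  rewrite mulrDl !mulrDr sT !mul1r !mulr1.
  apply/matrixP=> i j; rewrite !mxE; ring.
have Pn : forall n, (T + 1 - 1) ^+ n = (-1) ^+ n *: (1 - n%:R *: (T + 1)).
  elim=> [|n IH]; first by rewrite expr0 scale0r subr0 scale1r.
  rewrite exprSr IH -scalerAl [(-1) ^+ n.+1]exprSr -scalerA; congr (_ *: _).
  rewrite mulrBl !mulrBr !mul1r !mulr1 -scalerAl NN scaler0.
  apply/matrixP=> i j; rewrite !mxE; ring.
have N0 : T + 1 = 0.
  have hT' := hT; rewrite -[T](addrK 1) Pn -signr_odd hp expr1 scaleN1r in hT'.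
  move/oppr_inj/eqP: hT'.
  rewrite -subr_eq0 addrAC subrr add0r oppr_eq0 scalemx_eq0 pnatr_eq0.
  by case/orP => [/eqP p0|/eqP //]; move: hp; rewrite p0.
have T1 : T = -1 by apply/eqP; rewrite -addr_eq0 N0.
have e12 : X2 = X1.
  apply: oppr_inj; rewrite -(XT2 _ X2 h1).
  by rewrite -/(X1 * X2) -/T T1 mulmxN mulmx1.
have [v [c [nv vc _]]] : exists v : 'rV[CC]_2, exists c, [/\ v != 0, v *m X1 = c *: v & (c = 'i \/ c = - 'i)].
  apply: eig_quad; rewrite subrr scale0r sub0r mulrN -expr2 sqrCi opprK.
  exact: sq1.
by exists v; split => //; exists c, c; rewrite e12.
Qed.

Lemma two_neq0 : (2 : CC) != 0.
Proof. by rewrite pnatr_eq0. Qed.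

Lemma rho_exists p X1 X2 : tf X1 -> tf X2 -> (X1 * X2) ^+ p = -1 ->
  exists c : CC, c ^+ p = -1 /\ \tr (X1 *m X2) = c + c^-1.
Proof.
move=> h1 h2 hT.
set t := \tr (X1 *m X2).
set s := sqrtC (t ^+ 2 - 4).
have hs : s ^+ 2 = t ^+ 2 - 4 by rewrite sqrtCK.
set l := (t + s) / 2.
have hl : l * (t - l) = 1.
  have -> : l * (t - l) = (t ^+ 2 - s ^+ 2) / 4.
    by rewrite /l; field.
  by rewrite hs; field.
have hq : (X1 *m X2) *m (X1 *m X2) = (l + (t - l)) *: (X1 *m X2) - (l * (t - l))%:M.
  by rewrite hl [l + _]addrC subrK; exact: sqT.
have [v [c [nv vc hc]]] := eig_quad (X1 *m X2) l (t - l) hq.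
have hc1 : c * (t - c) = 1.
  case: hc => -> //; have -> : t - (t - l) = l by ring.
  by rewrite mulrC.
have c0 : c != 0 by apply/eqP=> c0; move: hc1; rewrite c0 mul0r => /eqP; rewrite eq_sym oner_eq0.
have vp : forall n, v *m (X1 * X2) ^+ n = c ^+ n *: v.
  elim=> [|n IH]; first by rewrite expr0 mulmx1 scale1r.
  rewrite exprSr -mulmxE mulmxA IH -scalemxAl vc scalerA -exprSr //.
exists c; split.
  apply: (scal_inj _ _ _ nv); rewrite -vp hT scaleN1r.
  by rewrite mulmxN mulmx1.
have : t - c = c^-1 by apply: (mulfI c0); rewrite hc1 mulfV.
by move=> <-; rewrite addrC subrK.
Qed.

Definition mk2 (a b c d : CC) : 'M[CC]_2 :=
  \matrix_(i < 2, j < 2) if i == 0 then (if j == 0 then a else b)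
                          else (if j == 0 then c else d).

Lemma mk2E a b c d : let M := mk2 a b c d in
  [/\ M 0 0 = a, M 0 1 = b, M 1 0 = c & M 1 1 = d].
Proof. by rewrite /mk2 !mxE. Qed.

Lemma mk2_mul a b c d a' b' c' d' :
  mk2 a b c d *m mk2 a' b' c' d' = mk2 (a*a' + b*c') (a*b' + b*d') (c*a' + d*c') (c*b' + d*d').
Proof.
apply/matrixP=> i j; rewrite !mxE sum2 !mxE.
by case: (ord2P i) => ->; case: (ord2P j) => ->.
Qed.

Lemma mk2_tr a b c d : \tr (mk2 a b c d) = a + d.
Proof. by rewrite tr2 !mxE. Qed.
Lemma mk2_det a b c d : \det (mk2 a b c d) = a * d - b * c.
Proof. by rewrite det2 !mxE. Qed.

Definition X0 := mk2 0 1 (-1) 0.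
Definition Yl (l : CC) := mk2 0 (- l^-1) l 0.

Lemma tfX0 : tf X0.
Proof. by split; rewrite ?mk2_tr ?mk2_det; ring. Qed.

Lemma tfY l : l != 0 -> tf (Yl l).
Proof. by move=> l0; split; rewrite ?mk2_tr ?mk2_det; [ring | rewrite mul0r sub0r mulNr opprK mulVf]. Qed.

Lemma X0Y l : X0 *m Yl l = mk2 l 0 0 l^-1.
Proof. by rewrite mk2_mul; congr mk2; ring. Qed.

Lemma X0Y_tr l : \tr (X0 *m Yl l) = l + l^-1.
Proof. by rewrite X0Y mk2_tr. Qed.

Lemma X0Y_pow l n : (X0 * Yl l) ^+ n = mk2 (l ^+ n) 0 0 (l^-1 ^+ n).
Proof.
elim: n => [|n IH].
  by rewrite !expr0; apply/matrixP=> i j; rewrite !mxE; case: (ord2P i) => ->; case: (ord2P j) => ->.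
rewrite exprS IH -mulmxE X0Y mk2_mul !exprS; congr mk2; ring.
Qed.

Lemma X0Y_p l p : l != 0 -> l ^+ p = -1 -> (X0 * Yl l) ^+ p = -1.
Proof.
move=> l0 lp; rewrite X0Y_pow exprVn lp invrN1.
apply/matrixP=> i j; rewrite !mxE; case: (ord2P i) => ->; case: (ord2P j) => -> /=; by rewrite ?mulr1n ?mulr0n ?oppr0.
Qed.

From mathcomp Require Import zify.

Lemma c_m1 (c : CC) : c != 0 -> c + c^-1 = -2 -> c = -1.
Proof.
move=> c0 h.
have : (c + 1) ^+ 2 = 0.
  have -> : (c + 1) ^+ 2 = c * (c + c^-1 + 2) by field; rewrite ?a0 ?b0 ?c0.
  by rewrite h addNr mulr0.
by move/eqP; rewrite sqrf_eq0 addr_eq0 => /eqP.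
Qed.

Lemma inv_sum (a b : CC) : a != 0 -> b != 0 -> a + a^-1 = b + b^-1 ->
  a = b \/ a * b = 1.
Proof.
move=> a0 b0 h.
have : (a - b) * (a * b - 1) = 0.
  have -> : (a - b) * (a * b - 1) = a * b * (a + a^-1) - a * b * (b + b^-1) by field; rewrite ?a0 ?b0 ?c0.
  by rewrite h subrr.
move/eqP; rewrite mulf_eq0 !subr_eq0 => /orP [/eqP|/eqP]; by [left|right].
Qed.

Section Roots.
Variables (p : nat) (z : CC).
Hypotheses (hp : odd p) (pz : (p.*2).-primitive_root z).
Local Notation k := (p.-1./2).
Definition lam (i : nat) := z ^+ (i.*2.+1).

Lemma p_gt0 : (0 < p)%N. Proof. by case: p hp. Qed.

Lemma z0 : z != 0.
Proof.
apply/eqP=> z0; have := prim_expr_order pz; rewrite z0 expr0n.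
have -> : (p.*2 == 0)%N = false by rewrite double_eq0 eqn0Ngt p_gt0.
by move/eqP; rewrite eq_sym oner_eq0.
Qed.

Lemma zp : z ^+ p = -1.
Proof.
have : (z ^+ p) ^+ 2 == 1 by rewrite -exprM muln2 (prim_expr_order pz).
rewrite sqrf_eq1 => /orP [|/eqP //].
rewrite -(prim_order_dvd pz) => /dvdn_leq; rewrite p_gt0 -addnn => /(_ isT).
by have := p_gt0; lia.
Qed.

Lemma lam_p i : lam i ^+ p = -1.
Proof. by rewrite /lam -exprM mulnC exprM zp -signr_odd /= odd_double. Qed.

Lemma lam0 i : lam i != 0.
Proof. by rewrite /lam expf_neq0 // z0. Qed.

Lemma hk : p = k.*2.+1.
Proof. exact: odd_half. Qed.

Lemma lam_ne i : (i < k)%N -> lam i != -1.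
Proof.
move=> ik; rewrite -zp /lam (eq_prim_root_expr pz) !modn_small; last 2 first.
- by rewrite -addnn; have := p_gt0; lia.
- by rewrite hk -!addnn; lia.
by apply/eqP; rewrite hk -!addnn; lia.
Qed.

Lemma lam_inj i j : (i < k)%N -> (j < k)%N ->
  lam i + (lam i)^-1 = lam j + (lam j)^-1 -> i = j.
Proof.
move=> ik jk /(inv_sum _ _ (lam0 i) (lam0 j)) [|].
  rewrite /lam => /eqP; rewrite (eq_prim_root_expr pz) !modn_small.
  - by move/eqP; lia.
  - by rewrite hk -!addnn; lia.
  - by rewrite hk -!addnn; lia.
rewrite /lam -exprD => /eqP; rewrite -(prim_order_dvd pz) => hd.
have pos : (0 < i.*2.+1 + j.*2.+1)%N by lia.
have hle := dvdn_leq pos hd; rewrite hk in hle; exfalso; move: hle ik jk; rewrite -!addnn; lia.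
Qed.

Lemma odd_lam j : odd j -> (j < p)%N -> exists2 m, (m < k)%N & z ^+ j = lam m.
Proof.
move=> oj jp; exists j./2; last first.
  by rewrite /lam; congr (_ ^+ _); rewrite -[LHS]odd_double_half oj add1n.
have := odd_double_half j; rewrite oj => e.
move: jp; rewrite hk -e -!addnn; lia.
Qed.

Lemma classify (c : CC) : c ^+ p = -1 -> c != -1 ->
  exists2 m, (m < k)%N & c + c^-1 = lam m + (lam m)^-1.
Proof.
move=> cp cn1.
have c0 : c != 0 by apply/eqP=> c0; move: cp; rewrite c0 expr0n; have := p_gt0; case: (p) => //= n _ /eqP; rewrite eq_sym oppr_eq0 oner_eq0.
have c2 : c ^+ (p.*2) = 1 by rewrite -muln2 exprM cp -signr_odd.
have [[j jlt] /= cj] := prim_rootP pz c2.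
have oj : odd j.
  case ej: (odd j) => //; move: cp; rewrite cj -exprM.
  have := odd_double_half j; rewrite ej add0n => e.
  have -> : (j * p = p.*2 * j./2)%N by rewrite -{1}e -!muln2; lia.
  rewrite exprM (prim_expr_order pz) expr1n => /eqP.
  by rewrite -subr_eq0 opprK -[1 + 1]/(2 : CC) (negbTE two_neq0).
case: (ltngtP j p) => [jp|pj|jp].
- have [m mk e] := odd_lam _ oj jp; exists m => //; by rewrite cj e.
- have oj' : odd (p.*2 - j) by rewrite oddB ?odd_double ?oj // ltnW.
  have jp' : (p.*2 - j < p)%N by move: pj jlt; rewrite -addnn; lia.
  have [m mk e] := odd_lam _ oj' jp'; exists m => //.
  have ci : c^-1 = lam m.
    apply: (mulfI c0); rewrite mulfV // -e cj -exprD subnKC ?(prim_expr_order pz) //.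
    exact: ltnW.
  by rewrite -ci invrK addrC.
- by move: cn1; rewrite cj jp zp eqxx.
Qed.
End Roots.

Lemma abelian_X0 : abelian_rep X0 X0.
Proof.
have E : forall w, exists x y : CC, evalw X0 X0 w = x%:M + y *: X0.
  move=> w; rewrite (evalw_cf _ _ tfX0 tfX0); case: (cf _ w) => [[[a b] c] d] /=.
  exists (a - b), (c - d); rewrite /comb (sq1 _ tfX0) mulNmx mul1mx.
  apply/matrixP=> i j; rewrite !mxE; ring.
move=> u v; have [a [b ->]] := E u; have [a' [b' ->]] := E v.
rewrite !mulmxDl !mulmxDr !mul_scalar_mx !mul_mx_scalar -!scalemxAl -!scalemxAr.
apply/matrixP=> i j; rewrite !mxE; ring.
Qed.

Lemma trA : \tr (X0 *m X0) = -2.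
Proof. by rewrite (sq1 _ tfX0) tr2 !mxE /= ?mulr1n; ring. Qed.

Lemma word12 X1 X2 : charac X1 X2 [:: (false, false); (true, false)] = \tr (X1 *m X2).
Proof. by rewrite /charac /= mulmx1. Qed.

Theorem mainTheorem3 (p : nat) (q : int) :
  odd p -> oddz q -> (0 < absz q)%N -> (absz q < p)%N -> coprime p (absz q) ->
  (* every character in S_0 is the character of a metabelian representation *)
  (forall chi, in_S0 p q chi ->
     exists X1 X2, [/\ is_rep p q X1 X2, metabelian X1 X2 & chi = charac X1 X2]) /\
  (* the single character of an abelian (reducible) representation ... *)
  (exists A1 A2,
     [/\ is_rep p q A1 A2, \tr A1 = 0, abelian_rep A1 A2,
         (forall X1 X2, is_rep p q X1 X2 -> \tr X1 = 0 -> reducible X1 X2 ->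
            charac X1 X2 = charac A1 A2) &
     (* ... together with (p-1)/2 distinct characters of irreducible
        metabelian representations *)
     exists B1 B2 : 'I_(p.-1./2) -> 'M[CC]_2,
       [/\ forall i, [/\ is_rep p q (B1 i) (B2 i), \tr (B1 i) = 0,
                         irreducible (B1 i) (B2 i) & metabelian (B1 i) (B2 i)],
           forall i j, charac (B1 i) (B2 i) = charac (B1 j) (B2 j) -> i = j,
           forall i, charac (B1 i) (B2 i) <> charac A1 A2 &
           forall X1 X2, is_rep p q X1 X2 -> \tr X1 = 0 -> irreducible X1 X2 ->
             exists i, charac X1 X2 = charac (B1 i) (B2 i)]]).
Proof.
move=> hp _ _ _ _; split.
  move=> chi [X1 [X2 [hr [t1 ->]]]]; exists X1, X2; split => //.
  have [h1 h2] := rep_tr2 _ _ _ _ hr t1; exact: metab_tf.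
have p0 := p_gt0 _ hp.
have [z pz] : exists z : CC, (p.*2).-primitive_root z by apply: prim_ex; rewrite double_gt0.
have A_rep : is_rep p q X0 X0.
  apply: (rep_of_pow _ _ _ _ tfX0 tfX0 hp).
  by rewrite (rsq1 _ tfX0) -signr_odd hp expr1.
have lne : forall i : 'I_(p.-1./2), lam z i != -1 := fun i => lam_ne _ _ hp pz _ (ltn_ord i).
have l0 : forall i : nat, lam z i != 0 := fun i => lam0 _ _ hp pz i.
exists X0, X0; split => //.
- exact: tfX0.1.
- exact: abelian_X0.
- move=> X1 X2 hr t1 hred; have [h1 h2] := rep_tr2 _ _ _ _ hr t1.
  by apply: charac_eq => //; try exact: tfX0; rewrite (red_t _ _ _ _ hr t1 hred) trA.
exists (fun _ => X0), (fun i => Yl (lam z i)); split.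
- move=> i; split.
  + exact: (rep_of_pow _ _ _ _ tfX0 (tfY _ (l0 i)) hp (X0Y_p _ _ (l0 i) (lam_p _ _ hp pz i))).
  + exact: tfX0.1.
  + move=> hred; have := red_t _ _ _ _ (rep_of_pow _ q _ _ tfX0 (tfY _ (l0 i)) hp (X0Y_p _ _ (l0 i) (lam_p _ _ hp pz i))) tfX0.1 hred.
    rewrite X0Y_tr => /(c_m1 _ (l0 i)) /eqP; by rewrite (negbTE (lne i)).
  + exact: metab_tf tfX0 (tfY _ (l0 i)).
- move=> i j e; have := congr1 (fun f => f [:: (false, false); (true, false)]) e.
  rewrite /= !word12 !X0Y_tr => /(lam_inj _ _ hp pz _ _ (ltn_ord i) (ltn_ord j)) ij.
  exact: val_inj.
- move=> i e; have := congr1 (fun f => f [:: (false, false); (true, false)]) e.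
  rewrite /= !word12 X0Y_tr trA => /(c_m1 _ (l0 i)) /eqP; by rewrite (negbTE (lne i)).
- move=> X1 X2 hr t1 hirr; have [h1 h2] := rep_tr2 _ _ _ _ hr t1.
  have hT := pow_of_rep _ _ _ _ hp hr t1.
  have [c [cp tc]] := rho_exists _ _ _ h1 h2 hT.
  case: (eqVneq c (-1)) => [c1|cn1].
    exfalso; apply: hirr; apply: (t2_red _ _ _ h1 h2 hp _ hT).
    by rewrite tc c1 invrN1; ring.
  have [m mk e] := classify _ _ hp pz _ cp cn1.
  exists (Ordinal mk); apply: charac_eq => //; first exact: tfX0.
    exact: tfY (l0 m).
  by rewrite X0Y_tr tc e.
Qed.
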